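(* Let $\lambda>0$, ${\rm T}>0$, $\mu>0$, $\sigma^2\ge 0$, $\alpha>2$ and $0<a\le 1$. For $\gamma_1\in(0,a)$ put $\gamma_2=a-\gamma_1$ and $$\mathrm{DSR}(\gamma_1)=\lambda\gamma_2\,p_{\rm cov}({\rm T},\lambda\gamma_1,\alpha).$$ If $\gamma_1^*\in(0,a)$ is a point at which $\mathrm{DSR}$ attains its maximum over $(0,a)$, then $\gamma_1^*<a/2<\gamma_2^*=a-\gamma_1^*< a\le 1$.
   Context: For $x>0$ the coverage probability is $$p_{\rm cov}({\rm T},x,\alpha)=\pi x\int_0^\infty e^{-\pi x r\,\beta({\rm T},\alpha)-\mu{\rm T}\sigma^2 r^{\alpha/2}}\,dr,$$ where $$\beta({\rm T},\alpha)=\frac{2(\mu{\rm T})^{2/\alpha}}{\alpha}\,\mathbb{E}\Big[g^{2/\alpha}\big(\Gamma(-2/\alpha,\mu{\rm T}g)-\Gamma(-2/\alpha)\big)\Big]>0,$$ with $g$ exponentially distributed with rate $\mu$ and $\Gamma(\cdot,\cdot)$ the upper incomplete Gamma function. This is the SINR coverage probability of a typical receiver served by its nearest transmitter when the transmitters form a homogeneous Poisson point process of intensity $x$, with Rayleigh fading, path loss exponent $\alpha$, transmit power $1/\mu$ and noise power $\sigma^2$. In the single-file model, the users form a homogeneous PPP of intensity $\lambda$. Independently, each user is a transmitter (fraction $\gamma_1$) or a receiver (fraction $\gamma_2$), with $\gamma_1+\gamma_2=a$. $\mathrm{DSR}$ denotes the density of successful receptions. *)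

(* Defs.v *)
From Stdlib Require Import Reals Lra ClassicalEpsilon.
Open Scope R_scope.

(* [improper_int_from lo f l]: the improper Riemann integral of f over
   (lo, +oo) converges to l, i.e. RiemannInt f over [u, b] tends to l as
   u -> lo+ and b -> +oo. (f is never evaluated at lo itself, so
   integrable singularities at lo are allowed.) *)
Definition improper_int_from (lo : R) (f : R -> R) (l : R) : Prop :=
  forall eps, 0 < eps ->
    exists d M, 0 < d /\
      forall u b, lo < u -> u < lo + d -> M < b -> u < b ->
        exists pr : Riemann_integrable f u b, Rabs (RiemannInt pr - l) < eps.

(* The value of the improper integral int_lo^oo f (chosen by Hilbert's
   epsilon; the limit is unique whenever it exists; 0 if it does not). *)
Definition IntFrom (lo : R) (f : R -> R) : R :=
  epsilon (inhabits 0) (fun l => improper_int_from lo f l).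

Definition euler_gamma (s : R) : R :=
  IntFrom 0 (fun t => Rpower t (s - 1) * exp (- t)).

(* Gamma extended to -1 < s < 0 by the functional equation
   Gamma(s) = Gamma(s+1)/s (analytic continuation). *)
Definition gamma_ext (s : R) : R :=
  if Rlt_dec 0 s then euler_gamma s else euler_gamma (s + 1) / s.

Definition upper_gamma (s x : R) : R :=
  IntFrom x (fun t => Rpower t (s - 1) * exp (- t)).

(* beta(T, alpha) = 2 (mu T)^(2/alpha) / alpha *
     E[ g^(2/alpha) (Gamma(-2/alpha, mu T g) - Gamma(-2/alpha)) ],
   g ~ Exp(rate mu), density mu e^(-mu g) on (0, oo). *)
Definition beta_fn (mu T alpha : R) : R :=
  2 * Rpower (mu * T) (2 / alpha) / alpha *
  IntFrom 0 (fun g => mu * exp (- (mu * g)) *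
     (Rpower g (2 / alpha) *
      (upper_gamma (- (2 / alpha)) (mu * T * g) - gamma_ext (- (2 / alpha))))).

Definition p_cov (mu sigma2 T x alpha : R) : R :=
  PI * x * IntFrom 0 (fun r =>
     exp (- (PI * x * r * beta_fn mu T alpha)
          - mu * T * sigma2 * Rpower r (alpha / 2))).

Definition DSR (lam a mu sigma2 T alpha gamma1 : R) : R :=
  lam * (a - gamma1) * p_cov mu sigma2 T (lam * gamma1) alpha.

(* Main.v *)
Require Import Defs.
From Stdlib Require Import Reals Lra ClassicalEpsilon.
From Coquelicot Require Import Coquelicot.
Open Scope R_scope.



Definition cont_on (lo : R) (f : R -> R) := forall x, lo < x -> continuous f x.

Lemma exR lo f u b : cont_on lo f -> lo < u -> lo < b -> ex_RInt f u b.
Proof.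
  intros Hc Hu Hb. apply (ex_RInt_continuous (V:=R_CompleteNormedModule)). intros z Hz. apply Hc.
  destruct Hz as [Hz _]. unfold Rmin in Hz. destruct (Rle_dec u b); lra.
Qed.

Lemma RInt_Chasles_R f a b c : ex_RInt f a b -> ex_RInt f b c ->
  RInt f a b + RInt f b c = RInt f a c.
Proof. intros. rewrite <- (RInt_Chasles (V:=R_CompleteNormedModule) f a b c); auto. Qed.

Lemma RInt_mono lo f u' u b b' : cont_on lo f -> (forall x, lo < x -> 0 <= f x) ->
  lo < u' -> u' <= u -> u <= b -> b <= b' -> RInt f u b <= RInt f u' b'.
Proof.
  intros Hc Hp H1 H2 H3 H4.
  rewrite <- (RInt_Chasles_R f u' u b') by (apply exR with lo; auto; lra).
  rewrite <- (RInt_Chasles_R f u b b') by (apply exR with lo; auto; lra).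
  assert (0 <= RInt f u' u).
  { apply RInt_ge_0; auto. apply exR with lo; auto; lra. intros; apply Hp; lra. }
  assert (0 <= RInt f b b').
  { apply RInt_ge_0; auto. apply exR with lo; auto; lra. intros; apply Hp; lra. }
  lra.
Qed.

Lemma improper_uniq lo f l l' : improper_int_from lo f l -> improper_int_from lo f l' -> l = l'.
Proof.
  intros H1 H2. destruct (Req_dec l l') as [|Hn]; auto. exfalso.
  set (e := Rabs (l - l') / 2).
  assert (He : 0 < e). { unfold e. assert (0 < Rabs (l-l')) by (apply Rabs_pos_lt; lra). lra. }
  destruct (H1 e He) as [d1 [M1 [Hd1 H1']]].
  destruct (H2 e He) as [d2 [M2 [Hd2 H2']]].
  set (u := lo + Rmin d1 d2 / 2).
  set (b := Rmax (Rmax M1 M2) u + 1).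
  assert (Hm: 0 < Rmin d1 d2) by (unfold Rmin; destruct (Rle_dec d1 d2); lra).
  assert (Hm1 : Rmin d1 d2 <= d1) by apply Rmin_l.
  assert (Hm2 : Rmin d1 d2 <= d2) by apply Rmin_r.
  assert (HM1 : M1 <= Rmax (Rmax M1 M2) u) by (eapply Rle_trans; [apply Rmax_l|apply Rmax_l]).
  assert (HM2 : M2 <= Rmax (Rmax M1 M2) u) by (eapply Rle_trans; [apply Rmax_r|apply Rmax_l]).
  assert (Hu : u <= Rmax (Rmax M1 M2) u) by apply Rmax_r.
  assert (Eu : u = lo + Rmin d1 d2 / 2) by reflexivity.
  assert (Eb : b = Rmax (Rmax M1 M2) u + 1) by reflexivity.
  clearbody u b.
  assert (Hc1 : lo < u /\ u < lo + d1 /\ M1 < b /\ u < b) by lra.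
  assert (Hc2 : lo < u /\ u < lo + d2 /\ M2 < b /\ u < b) by lra.
  destruct Hc1 as [A1 [A2 [A3 A4]]]. destruct Hc2 as [B1 [B2 [B3 B4]]].
  destruct (H1' u b A1 A2 A3 A4) as [p1 Hp1].
  destruct (H2' u b B1 B2 B3 B4) as [p2 Hp2].
  rewrite <- RInt_Reals in Hp1, Hp2.
  assert (Rabs (l - l') <= Rabs (RInt f u b - l) + Rabs (RInt f u b - l')).
  { replace (l - l') with ((RInt f u b - l') + - (RInt f u b - l)) by ring.
    eapply Rle_trans; [apply Rabs_triang|]. rewrite Rabs_Ropp. lra. }
  unfold e in *. lra.
Qed.

Lemma IntFrom_eq lo f l : improper_int_from lo f l -> IntFrom lo f = l.
Proof.
  intros H. unfold IntFrom.
  apply improper_uniq with lo f; auto.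
  apply epsilon_spec. exists l; auto.
Qed.

Lemma L1 lo f M : cont_on lo f -> (forall x, lo < x -> 0 <= f x) ->
  (forall u b, lo < u -> u < b -> RInt f u b <= M) ->
  exists l, improper_int_from lo f l /\
    (forall u b, lo < u -> u < b -> RInt f u b <= l) /\
    (forall M', (forall u b, lo < u -> u < b -> RInt f u b <= M') -> l <= M').
Proof.
  intros Hc Hp HM.
  set (E := fun y => exists u b, lo < u /\ u < b /\ y = RInt f u b).
  assert (Hb : bound E). { exists M. intros y [u [b [H1 [H2 ->]]]]. auto. }
  assert (Hne : exists y, E y). { exists (RInt f (lo+1) (lo+2)), (lo+1), (lo+2). repeat split; lra. }
  destruct (completeness E Hb Hne) as [l [Hub Hlub]].
  exists l. split; [|split].
  - intros eps Heps.
    assert (Hex : exists u0 b0, lo < u0 /\ u0 < b0 /\ l - eps < RInt f u0 b0).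
    { apply NNPP. intros Hn. assert (l <= l - eps); [|lra].
      apply Hlub. intros y [u [b [H1 [H2 ->]]]].
      apply Rnot_lt_le. intros Hlt. apply Hn. exists u, b. auto. }
    destruct Hex as [u0 [b0 [H1 [H2 H3]]]].
    exists (u0 - lo), b0. split; [lra|].
    intros u b Hu1 Hu2 Hb1 Hub'.
    exists (ex_RInt_Reals_0 _ _ _ (exR lo f u b Hc Hu1 ltac:(lra))).
    rewrite <- RInt_Reals.
    assert (RInt f u0 b0 <= RInt f u b) by (apply RInt_mono with lo; auto; lra).
    assert (RInt f u b <= l) by (apply Hub; exists u, b; auto).
    apply Rabs_def1; lra.
  - intros u b H1 H2. apply Hub. exists u, b; auto.
  - intros M' HM'. apply Hlub. intros y [u [b [H1 [H2 ->]]]]. auto.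
Qed.

Lemma cont_RInt f a v0 : cont_on 0 f -> 0 < a -> 0 < v0 ->
  forall eps, 0 < eps -> exists dl, 0 < dl /\
    forall v, Rabs (v - v0) < dl -> Rabs (RInt f a v - RInt f a v0) < eps.
Proof.
  intros Hc Ha Hv eps He.
  assert (Hcont : continuous (RInt f a) v0).
  { apply (continuous_RInt_1 (V:=R_CompleteNormedModule) f a v0 (RInt f a)).
    assert (Hp : 0 < v0/2) by lra.
    exists (mkposreal _ Hp). intros y Hy. apply (RInt_correct (V:=R_CompleteNormedModule)).
    apply exR with 0; auto. change (Rabs (y - v0) < v0/2) in Hy.
    apply Rabs_def2 in Hy. lra. }
  apply continuity_pt_filterlim in Hcont.
  destruct (Hcont eps He) as [dl [Hdl H]].
  exists dl. split; auto. intros v Hvv.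
  destruct (Req_dec v v0) as [->|Hne].
  - unfold Rminus. rewrite Rplus_opp_r, Rabs_R0. auto.
  - apply H. split. split; auto. exact I. auto.
Qed.
Lemma L3 f lo y l : cont_on 0 f -> 0 < lo -> lo < y ->
  improper_int_from lo f l -> improper_int_from y f (l - RInt f lo y).
Proof.
  intros Hc Hlo Hy H eps He.
  destruct (H (eps/2) ltac:(lra)) as [d [M [Hd HH]]].
  destruct (cont_RInt f lo lo Hc Hlo Hlo (eps/4) ltac:(lra)) as [dl1 [Hdl1 C1]].
  destruct (cont_RInt f y y Hc ltac:(lra) ltac:(lra) (eps/4) ltac:(lra)) as [dl2 [Hdl2 C2]].
  rewrite RInt_point in C1, C2. change (zero : R) with 0 in C1, C2.
  set (m := Rmin (Rmin d dl1) (y - lo)).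
  assert (Hm1 : m <= d) by (unfold m; eapply Rle_trans; [apply Rmin_l|apply Rmin_l]).
  assert (Hm2 : m <= dl1) by (unfold m; eapply Rle_trans; [apply Rmin_l|apply Rmin_r]).
  assert (Hm3 : m <= y - lo) by (unfold m; apply Rmin_r).
  assert (Hm0 : 0 < m) by (unfold m; apply Rmin_glb_lt; [apply Rmin_glb_lt|]; lra).
  clearbody m.
  set (u1 := lo + m/2).
  assert (Eu1 : u1 = lo + m/2) by reflexivity. clearbody u1.
  exists dl2, M. split; auto.
  intros u b Hu1 Hu2 Hb Hub.
  destruct (HH u1 b ltac:(lra) ltac:(lra) Hb ltac:(lra)) as [p1 Hp1].
  rewrite <- RInt_Reals in Hp1.
  exists (ex_RInt_Reals_0 _ _ _ (exR 0 f u b Hc ltac:(lra) ltac:(lra))).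
  rewrite <- RInt_Reals.
  assert (A1 : Rabs (RInt f lo u1 - 0) < eps/4) by (apply C1; apply Rabs_def1; lra).
  assert (A2 : Rabs (RInt f y u - 0) < eps/4) by (apply C2; apply Rabs_def1; lra).
  rewrite Rminus_0_r in A1, A2.
  pose proof (RInt_Chasles_R f lo y u ltac:(apply exR with 0; auto; lra) ltac:(apply exR with 0; auto; lra)) as E2.
  pose proof (RInt_Chasles_R f lo u b ltac:(apply exR with 0; auto; lra) ltac:(apply exR with 0; auto; lra)) as E3.
  pose proof (RInt_Chasles_R f lo u1 b ltac:(apply exR with 0; auto; lra) ltac:(apply exR with 0; auto; lra)) as E1.
  apply Rabs_def2 in A1. apply Rabs_def2 in A2. apply Rabs_def2 in Hp1.
  apply Rabs_def1; lra.
Qed.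

Lemma exp_int_bound k u b : 0 < k -> 0 <= u -> u <= b ->
  RInt (fun t => exp (-(k*t))) u b <= 1/k.
Proof.
  intros Hk Hu Hb.
  assert (H : is_RInt (fun t => exp (-(k*t))) u b
     (minus ((fun t => - exp (-(k*t)) / k) b) ((fun t => - exp (-(k*t)) / k) u))).
  { apply (is_RInt_derive (V:=R_CompleteNormedModule) (fun t => - exp (-(k*t)) / k)).
    - intros x _. auto_derive; auto. field. lra.
    - intros x _. apply (ex_derive_continuous (V:=R_NormedModule)). auto_derive. auto. }
  rewrite (is_RInt_unique _ _ _ _ H). unfold minus, plus, opp. simpl.
  assert (0 < exp (-(k*b))) by apply exp_pos.
  assert (exp (-(k*u)) <= 1).
  { rewrite <- exp_0. destruct (Req_dec u 0) as [->|]. rewrite Rmult_0_r, Ropp_0. lra.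
    left. apply exp_increasing. assert (0 < k*u) by (apply Rmult_lt_0_compat; lra). lra. }
  unfold Rdiv. apply Rmult_le_reg_l with k; auto.
  replace (k * (- exp (- (k * b)) * / k + - (- exp (- (k * u)) * / k))) with (exp (-(k*u)) - exp (-(k*b))) by (field; lra).
  replace (k * (1 * / k)) with 1 by (field; lra). lra.
Qed.

Lemma pow_int_bound0 d u : 0 < d < 1 -> 0 < u -> u <= 1 ->
  RInt (fun t => Rpower t (-d)) u 1 <= 1/(1-d).
Proof.
  intros Hd Hu Hu1.
  assert (H : is_RInt (fun t => Rpower t (-d)) u 1
     (minus ((fun t => Rpower t (1-d) / (1-d)) 1) ((fun t => Rpower t (1-d) / (1-d)) u))).
  { apply (is_RInt_derive (V:=R_CompleteNormedModule) (fun t => Rpower t (1-d) / (1-d))).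
    - intros x Hx. assert (0 < x). { destruct Hx as [Hx _]. unfold Rmin in Hx. destruct (Rle_dec u 1); lra. }
      unfold Rpower. auto_derive; auto.
      replace ((1-d) * ln x) with (-d * ln x + ln x) by ring. rewrite exp_plus, exp_ln by auto. field. lra.
    - intros x Hx. assert (0 < x). { destruct Hx as [Hx _]. unfold Rmin in Hx. destruct (Rle_dec u 1); lra. }
      apply (ex_derive_continuous (V:=R_NormedModule)). unfold Rpower. auto_derive. auto. }
  rewrite (is_RInt_unique _ _ _ _ H). unfold minus, plus, opp. simpl.
  assert (0 < Rpower u (1-d)) by (unfold Rpower; apply exp_pos).
  unfold Rpower at 1. rewrite ln_1, Rmult_0_r, exp_0.
  unfold Rdiv. apply Rmult_le_reg_l with (1-d); [lra|].
  replace ((1 - d) * (1 * / (1 - d) + - (Rpower u (1 - d) * / (1 - d)))) with (1 - Rpower u (1-d)) by (field; lra).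
  replace ((1 - d) * (1 * / (1 - d))) with 1 by (field; lra). lra.
Qed.

Lemma pow_int_bound1 d u b : 0 < d -> 0 < u -> u <= b ->
  RInt (fun t => Rpower t (-d-1)) u b <= Rpower u (-d) / d.
Proof.
  intros Hd Hu Hb.
  assert (H : is_RInt (fun t => Rpower t (-d-1)) u b
     (minus ((fun t => - Rpower t (-d) / d) b) ((fun t => - Rpower t (-d) / d) u))).
  { apply (is_RInt_derive (V:=R_CompleteNormedModule) (fun t => - Rpower t (-d) / d)).
    - intros x Hx. assert (0 < x). { destruct Hx as [Hx _]. unfold Rmin in Hx. destruct (Rle_dec u b); lra. }
      unfold Rpower. auto_derive; auto.
      replace (-d * ln x) with ((-d-1) * ln x + ln x) by ring. rewrite exp_plus, exp_ln by auto. field. lra.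
    - intros x Hx. assert (0 < x). { destruct Hx as [Hx _]. unfold Rmin in Hx. destruct (Rle_dec u b); lra. }
      apply (ex_derive_continuous (V:=R_NormedModule)). unfold Rpower. auto_derive. auto. }
  rewrite (is_RInt_unique _ _ _ _ H). unfold minus, plus, opp. simpl.
  assert (0 < Rpower b (-d)) by (unfold Rpower; apply exp_pos).
  unfold Rdiv. apply Rmult_le_reg_l with d; [lra|].
  replace (d * (- Rpower b (- d) * / d + - (- Rpower u (- d) * / d))) with (Rpower u (-d) - Rpower b (-d)) by (field; lra).
  replace (d * (Rpower u (- d) * / d)) with (Rpower u (-d)) by (field; lra). lra.
Qed.



Lemma cont_Rpower_exp p k : cont_on 0 (fun t => Rpower t p * exp (-(k*t))).
Proof. intros x Hx. apply (ex_derive_continuous (V:=R_NormedModule)). unfold Rpower. auto_derive. auto. Qed.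

Lemma cont_Rpower p : cont_on 0 (fun t => Rpower t p).
Proof. intros x Hx. apply (ex_derive_continuous (V:=R_NormedModule)). unfold Rpower. auto_derive. auto. Qed.

Lemma cont_exp k : cont_on 0 (fun t => exp (-(k*t))).
Proof. intros x Hx. apply (ex_derive_continuous (V:=R_NormedModule)). auto_derive. auto. Qed.

Lemma Rpower_pos t p : 0 < Rpower t p.
Proof. unfold Rpower. apply exp_pos. Qed.

Lemma exp_le x y : x <= y -> exp x <= exp y.
Proof. intros [H| ->]; [left; apply exp_increasing; auto|lra]. Qed.

Lemma ln_le x y : 0 < x -> x <= y -> ln x <= ln y.
Proof. intros Hx [H| ->]; [left; apply ln_increasing; auto|lra]. Qed.

Lemma ln_ge0 x : 1 <= x -> 0 <= ln x.
Proof. intros H. rewrite <- ln_1. apply ln_le; lra. Qed.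

Lemma Rpower_le1 t d : 1 <= t -> 0 <= d -> Rpower t (-d) <= 1.
Proof. intros Ht Hd. unfold Rpower. rewrite <- exp_0. apply exp_le.
  assert (0 <= d * ln t) by (apply Rmult_le_pos; auto; apply ln_ge0; auto). lra. Qed.

Lemma euler_pos d : 0 < d < 1 -> 0 < euler_gamma (-d + 1).
Proof.
  intros Hd. unfold euler_gamma.
  set (f := fun t => Rpower t (-d + 1 - 1) * exp (- t)).
  assert (Hf : forall t, f t = Rpower t (-d) * exp (-(1*t))).
  { intros t. unfold f. replace (-d+1-1) with (-d) by ring. rewrite Rmult_1_l. auto. }
  assert (Hc : cont_on 0 f).
  { intros x Hx. eapply continuous_ext; [|apply (cont_Rpower_exp (-d) 1 x Hx)]. intros; simpl; rewrite Hf; auto. }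
  assert (Hp : forall x, 0 < x -> 0 <= f x).
  { intros x _. rewrite Hf. left. apply Rmult_lt_0_compat; [apply Rpower_pos|apply exp_pos]. }
  destruct (L1 0 f (1/(1-d) + 1/1) Hc Hp) as [l [Hl [Hl1 _]]].
  - intros u b Hu Hub.
    set (u' := Rmin u 1). set (b' := Rmax b 1).
    assert (Hu'1 : u' <= 1) by apply Rmin_r. assert (Hu'2 : u' <= u) by apply Rmin_l.
    assert (Hu'0 : 0 < u') by (unfold u'; apply Rmin_glb_lt; lra).
    assert (Hb'1 : 1 <= b') by apply Rmax_r. assert (Hb'2 : b <= b') by apply Rmax_l.
    clearbody u' b'.
    eapply Rle_trans. apply (RInt_mono 0 f u' u b b'); auto; lra.
    rewrite <- (RInt_Chasles_R f u' 1 b') by (apply exR with 0; auto; lra).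
    apply Rplus_le_compat.
    + eapply Rle_trans; [|apply (pow_int_bound0 d u'); auto; lra].
      apply RInt_le; auto. apply exR with 0; auto; lra. apply exR with 0; [apply cont_Rpower|lra|lra].
      intros x Hx. rewrite Hf. rewrite <- (Rmult_1_r (Rpower x (-d))) at 2.
      apply Rmult_le_compat_l. left; apply Rpower_pos. apply Rle_trans with (exp 0); [apply exp_le; lra | rewrite exp_0; lra].
    + eapply Rle_trans; [|apply (exp_int_bound 1 1 b'); lra].
      apply RInt_le; auto. apply exR with 0; auto; lra. apply exR with 0; [apply cont_exp|lra|lra].
      intros x Hx. rewrite Hf. rewrite <- (Rmult_1_l (exp (-(1*x)))) at 2.
      apply Rmult_le_compat_r. left; apply exp_pos. apply Rpower_le1; lra.
  - rewrite (IntFrom_eq 0 f l Hl).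
    eapply Rlt_le_trans; [|apply (Hl1 1 2); lra].
    apply RInt_gt_0. lra. intros x Hx. rewrite Hf. apply Rmult_lt_0_compat; [apply Rpower_pos|apply exp_pos].
    intros x Hx. apply Hc. lra.
Qed.



Definition fU d := fun t => Rpower t (-d-1) * exp (- t).

Lemma cont_fU d : cont_on 0 (fU d).
Proof. intros x Hx. unfold fU. apply (ex_derive_continuous (V:=R_NormedModule)). unfold Rpower. auto_derive. auto. Qed.

Lemma cont_on_mono lo lo' f : lo <= lo' -> cont_on lo f -> cont_on lo' f.
Proof. intros H Hc x Hx. apply Hc. lra. Qed.

Lemma fU_pos d t : 0 <= fU d t.
Proof. unfold fU. left. apply Rmult_lt_0_compat; [apply Rpower_pos|apply exp_pos]. Qed.

Lemma U_ex d x : 0 < d -> 0 < x -> exists l, improper_int_from x (fU d) l /\ 0 <= l /\ l <= Rpower x (-d) / d.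
Proof.
  intros Hd Hx.
  assert (Hc : cont_on x (fU d)) by (apply cont_on_mono with 0; [lra|apply cont_fU]).
  assert (HB : forall u b, x < u -> u < b -> RInt (fU d) u b <= Rpower x (-d) / d).
  { intros u b Hu Hub.
    eapply Rle_trans; [|apply Rle_trans with (Rpower u (-d) / d)].
    + apply RInt_le. lra. apply exR with x; auto; lra. apply exR with 0; [apply cont_Rpower|lra|lra].
      intros t Ht. unfold fU. rewrite <- (Rmult_1_r (Rpower t (-d-1))) at 2.
      apply Rmult_le_compat_l. left; apply Rpower_pos.
      apply Rle_trans with (exp 0); [apply exp_le; lra | rewrite exp_0; lra].
    + apply pow_int_bound1; lra.
    + unfold Rdiv. apply Rmult_le_compat_r. left; apply Rinv_0_lt_compat; lra.
      unfold Rpower. apply exp_le. assert (ln x <= ln u) by (apply ln_le; lra). nra. }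
  destruct (L1 x (fU d) (Rpower x (-d) / d) Hc (fun t _ => fU_pos d t) HB) as [l [Hl [Hl1 Hl2]]].
  - exists l. split; auto. split; auto.
    eapply Rle_trans; [|apply (Hl1 (x+1) (x+2)); lra].
    apply RInt_ge_0. lra. apply exR with x; auto; lra. intros; apply fU_pos.
Qed.

Lemma U_props d x : 0 < d -> 0 < x ->
  improper_int_from x (fU d) (upper_gamma (-d) x) /\ 0 <= upper_gamma (-d) x <= Rpower x (-d) / d.
Proof.
  intros Hd Hx. destruct (U_ex d x Hd Hx) as [l [H1 H2]].
  assert (E : upper_gamma (-d) x = l) by (apply IntFrom_eq; exact H1).
  rewrite E. auto.
Qed.

Lemma U_shift d x : 0 < d -> 0 < x ->
  upper_gamma (-d) x = upper_gamma (-d) 1 + RInt (fU d) x 1.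
Proof.
  intros Hd Hx.
  destruct (U_props d x Hd Hx) as [Hx1 _].
  destruct (U_props d 1 Hd ltac:(lra)) as [H11 _].
  destruct (Rtotal_order x 1) as [Hlt|[Heq|Hgt]].
  - pose proof (L3 (fU d) x 1 _ (cont_fU d) Hx Hlt Hx1) as H.
    pose proof (improper_uniq _ _ _ _ H H11). lra.
  - subst. rewrite RInt_point. simpl. change (zero:R) with 0. lra.
  - pose proof (L3 (fU d) 1 x _ (cont_fU d) ltac:(lra) Hgt H11) as H.
    pose proof (improper_uniq _ _ _ _ H Hx1).
    rewrite <- (opp_RInt_swap (V:=R_CompleteNormedModule)) by (apply exR with 0; [apply cont_fU|lra|lra]).
    change (opp (RInt (fU d) 1 x)) with (- RInt (fU d) 1 x). lra.
Qed.



Definition hfun mu T d G := fun g => mu * exp (- (mu * g)) * (Rpower g d * (upper_gamma (- d) (mu * T * g) - G)).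

Lemma gamma_ext_neg d : 0 < d < 1 -> gamma_ext (-d) = euler_gamma (-d+1) / (-d).
Proof. intros Hd. unfold gamma_ext. destruct (Rlt_dec 0 (-d)); [lra|auto]. Qed.

Lemma in_ball_pos (g0 : R) (Hg : 0 < g0/2) y : ball g0 (mkposreal _ Hg) y -> g0/2 < y.
Proof. intros Hy. change (Rabs (y - g0) < g0/2) in Hy. apply Rabs_def2 in Hy. lra. Qed.

Lemma cont_RInt_lower f v0 : cont_on 0 f -> 0 < v0 -> continuous (fun v => RInt f v 1) v0.
Proof.
  intros Hc Hv.
  apply continuous_ext_loc with (g := fun v => - RInt f 1 v).
  - assert (Hp : 0 < v0/2) by lra. exists (mkposreal _ Hp). intros y Hy.
    apply in_ball_pos in Hy.
    rewrite <- (opp_RInt_swap (V:=R_CompleteNormedModule)) by (apply exR with 0; [auto|lra|lra]).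
    unfold opp; simpl; ring.
  - apply (continuous_opp (fun v => RInt f 1 v)).
    apply (continuous_RInt_1 (V:=R_CompleteNormedModule) f 1 v0 (RInt f 1)).
    assert (Hp : 0 < v0/2) by lra. exists (mkposreal _ Hp). intros y Hy.
    apply in_ball_pos in Hy.
    apply (RInt_correct (V:=R_CompleteNormedModule)). apply exR with 0; auto; lra.
Qed.

Lemma cont_h mu T d G : 0 < mu -> 0 < T -> 0 < d -> cont_on 0 (hfun mu T d G).
Proof.
  intros Hmu HT Hd g0 Hg0.
  set (h2 := fun g => mu * exp (- (mu * g)) * (Rpower g d * ((upper_gamma (-d) 1 + RInt (fU d) (mu*T*g) 1) - G))).
  apply continuous_ext_loc with (g := h2).
  - assert (Hp : 0 < g0/2) by lra. exists (mkposreal _ Hp). intros y Hy.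
    apply in_ball_pos in Hy. unfold h2, hfun.
    rewrite <- U_shift; auto. assert (0 < mu*T) by nra. nra.
  - unfold h2.
    apply (continuous_mult (fun g => mu * exp (- (mu * g)))).
    { apply (ex_derive_continuous (V:=R_NormedModule)). auto_derive. auto. }
    apply (continuous_mult (fun g => Rpower g d)).
    { apply (ex_derive_continuous (V:=R_NormedModule)). unfold Rpower. auto_derive. auto. }
    apply (continuous_minus (fun g => upper_gamma (-d) 1 + RInt (fU d) (mu*T*g) 1) (fun _ => G)).
    2: apply continuous_const.
    apply (continuous_plus (fun _ => upper_gamma (-d) 1) (fun g => RInt (fU d) (mu*T*g) 1)).
    apply continuous_const.
    apply (continuous_comp (fun g => mu*T*g) (fun v => RInt (fU d) v 1)).
    { apply (ex_derive_continuous (V:=R_NormedModule)). auto_derive. auto. }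
    apply cont_RInt_lower. apply cont_fU. assert (0 < mu*T) by nra. nra.
Qed.

Lemma Rpower_le_1plus g d : 0 < g -> 0 < d < 1 -> Rpower g d <= 1 + g.
Proof.
  intros Hg Hd. unfold Rpower.
  destruct (Rle_dec g 1) as [H|H].
  - assert (ln g <= 0) by (rewrite <- ln_1; apply ln_le; lra).
    apply Rle_trans with (exp 0); [apply exp_le; nra|rewrite exp_0; lra].
  - assert (0 <= ln g) by (apply ln_ge0; lra).
    apply Rle_trans with (exp (ln g)); [apply exp_le; nra|rewrite exp_ln; lra].
Qed.

Lemma pow_exp_bound g d mu : 0 < g -> 0 < d < 1 -> 0 < mu ->
  Rpower g d * exp (-(mu*g)) <= (1 + 2/mu) * exp (-((mu/2)*g)).
Proof.
  intros Hg Hd Hmu.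
  assert (E : exp (-(mu*g)) = exp (-((mu/2)*g)) * exp (-((mu/2)*g))).
  { rewrite <- exp_plus. f_equal. field. }
  rewrite E.
  assert (H1 : 1 + (mu/2)*g <= exp ((mu/2)*g)) by apply exp_ineq1_le.
  assert (H2 : exp ((mu/2)*g) * exp (-((mu/2)*g)) = 1).
  { rewrite <- exp_plus. replace (mu / 2 * g + - (mu / 2 * g)) with 0 by ring. apply exp_0. }
  assert (H3 : Rpower g d <= 1 + g) by (apply Rpower_le_1plus; auto).
  assert (H4 : 1 + g <= (1 + 2/mu) * (1 + (mu/2)*g)).
  { replace ((1 + 2/mu) * (1 + (mu/2)*g)) with (1 + g + (mu/2)*g + 2/mu) by (field; lra).
    assert (0 < 2/mu) by (apply Rdiv_lt_0_compat; lra). nra. }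
  assert (0 < exp (-((mu/2)*g))) by apply exp_pos.
  assert (0 < Rpower g d) by apply Rpower_pos.
  assert (Rpower g d <= (1 + 2/mu) * exp ((mu/2)*g)).
  { apply Rle_trans with ((1 + 2/mu) * (1 + (mu/2)*g)). lra.
    apply Rmult_le_compat_l. assert (0 < 2/mu) by (apply Rdiv_lt_0_compat; lra). lra. auto. }
  rewrite <- Rmult_assoc. apply Rmult_le_compat_r. lra.
  apply Rle_trans with ((1+2/mu)*exp ((mu/2)*g)*exp (-((mu/2)*g))).
  apply Rmult_le_compat_r; lra. rewrite Rmult_assoc, H2; lra.
Qed.

Lemma Rpower_cancel g d c : 0 < g -> 0 < c -> Rpower g d * Rpower (c*g) (-d) = Rpower c (-d).
Proof.
  intros Hg Hc. unfold Rpower. rewrite <- exp_plus. f_equal. rewrite ln_mult by auto. ring.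
Qed.

Lemma beta_int_pos mu T d : 0 < mu -> 0 < T -> 0 < d < 1 ->
  0 < IntFrom 0 (hfun mu T d (gamma_ext (-d))).
Proof.
  intros Hmu HT Hd.
  set (E := euler_gamma (-d+1)).
  assert (HE : 0 < E) by (apply euler_pos; auto).
  set (G := gamma_ext (-d)).
  assert (HG : G = - (E/d)) by (unfold G, E; rewrite gamma_ext_neg by auto; field; lra).
  set (h := hfun mu T d G).
  assert (HmT : 0 < mu*T) by nra.
  assert (Hlow : forall g, 0 < g -> mu * exp (-(mu*g)) * (Rpower g d * (E/d)) <= h g).
  { intros g Hg. unfold h, hfun. destruct (U_props d (mu*T*g) ltac:(lra) ltac:(nra)) as [_ [HU _]].
    apply Rmult_le_compat_l. assert (0 < exp (-(mu*g))) by apply exp_pos. nra.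
    apply Rmult_le_compat_l. left; apply Rpower_pos. lra. }
  assert (HEd : 0 < E/d) by (apply Rdiv_lt_0_compat; lra).
  assert (Hpos : forall g, 0 < g -> 0 < h g).
  { intros g Hg. eapply Rlt_le_trans; [|apply Hlow; auto].
    apply Rmult_lt_0_compat. apply Rmult_lt_0_compat; auto; apply exp_pos.
    apply Rmult_lt_0_compat; auto; apply Rpower_pos. }
  set (C := mu * (Rpower (mu*T) (-d) / d) + mu * ((1 + 2/mu) * (E/d))).
  assert (Hup : forall g, 0 < g -> h g <= C * exp (-((mu/2)*g))).
  { intros g Hg. unfold h, hfun. destruct (U_props d (mu*T*g) ltac:(lra) ltac:(nra)) as [_ [_ HU]].
    rewrite HG.
    assert (Hx1 : Rpower g d * (upper_gamma (-d) (mu*T*g) - - (E/d)) <= Rpower (mu*T) (-d) / d + Rpower g d * (E/d)).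
    { rewrite <- (Rpower_cancel g d (mu*T)) by auto.
      assert (0 < Rpower g d) by apply Rpower_pos.
      replace (mu*T*g) with ((mu*T)*g) in HU by ring.
      assert (Rpower g d * upper_gamma (-d) (mu*T*g) <= Rpower g d * (Rpower (mu*T*g) (-d) / d)) by (apply Rmult_le_compat_l; lra).
      unfold Rdiv in *. nra. }
    assert (He1 : exp (-(mu*g)) <= exp (-((mu/2)*g))) by (apply exp_le; nra).
    assert (He2 := pow_exp_bound g d mu Hg Hd Hmu).
    assert (0 < exp (-(mu*g))) by apply exp_pos.
    assert (0 < Rpower (mu*T) (-d) / d) by (apply Rdiv_lt_0_compat; [apply Rpower_pos|lra]).
    apply Rle_trans with (mu * exp (-(mu*g)) * (Rpower (mu * T) (- d) / d + Rpower g d * (E / d))).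
    apply Rmult_le_compat_l; nra.
    unfold C.
    assert (mu * (Rpower (mu*T) (-d) / d) * exp (-(mu*g)) <= mu * (Rpower (mu*T) (-d) / d) * exp (-((mu/2)*g))).
    { apply Rmult_le_compat_l; nra. }
    assert (mu * (E/d) * (Rpower g d * exp (-(mu*g))) <= mu * (E/d) * ((1 + 2/mu) * exp (-((mu/2)*g)))).
    { apply Rmult_le_compat_l; nra. }
    nra. }
  assert (Hc : cont_on 0 h) by (apply cont_h; lra).
  assert (HB : forall u b, 0 < u -> u < b -> RInt h u b <= C * (1/(mu/2))).
  { intros u b Hu Hub.
    apply Rle_trans with (RInt (fun t => scal C (exp (-((mu/2)*t)))) u b).
    - apply RInt_le. lra. apply exR with 0; auto; lra.
      apply (ex_RInt_scal (V:=R_NormedModule)). apply exR with 0; [apply cont_exp|lra|lra].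
      intros x Hx. apply Hup. lra.
    - rewrite (RInt_scal (V:=R_CompleteNormedModule)) by (apply exR with 0; [apply cont_exp|lra|lra]).
      change (scal C ?x) with (C * x).
      apply Rmult_le_compat_l.
      + unfold C. assert (0 < Rpower (mu*T) (-d) / d) by (apply Rdiv_lt_0_compat; [apply Rpower_pos|lra]).
        assert (0 < 2/mu) by (apply Rdiv_lt_0_compat; lra).
        left. apply Rplus_lt_0_compat; apply Rmult_lt_0_compat; try lra. apply Rmult_lt_0_compat; lra.
      + apply exp_int_bound; lra. }
  destruct (L1 0 h _ Hc (fun x Hx => Rlt_le _ _ (Hpos x Hx)) HB) as [l [Hl [Hl1 _]]].
  rewrite (IntFrom_eq 0 h l Hl).
  eapply Rlt_le_trans; [|apply (Hl1 1 2); lra].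
  apply RInt_gt_0. lra. intros x Hx. apply Hpos. lra. intros x Hx. apply Hc. lra.
Qed.



Lemma pos3 a b c : 0 < a -> 0 < b -> 0 < c -> 0 < a*b*c.
Proof. intros. apply Rmult_lt_0_compat; [apply Rmult_lt_0_compat|]; auto. Qed.
Lemma pos4 a b c d : 0 < a -> 0 < b -> 0 < c -> 0 < d -> 0 < a*b*c*d.
Proof. intros. apply Rmult_lt_0_compat; [apply pos3|]; auto. Qed.

Definition phi x bt c k := fun r => exp (-(PI*x*r*bt) - c*Rpower r k).

Lemma cont_phi x bt c k : cont_on 0 (phi x bt c k).
Proof. intros r Hr. unfold phi. apply (ex_derive_continuous (V:=R_NormedModule)). unfold Rpower. auto_derive. auto. Qed.

Lemma phi_pos x bt c k r : 0 < phi x bt c k r.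
Proof. apply exp_pos. Qed.

Lemma I_ex x bt c k : 0 < x -> 0 < bt -> 0 <= c ->
  exists l, improper_int_from 0 (phi x bt c k) l /\
    (forall u b, 0 < u -> u < b -> RInt (phi x bt c k) u b <= l) /\
    (forall M', (forall u b, 0 < u -> u < b -> RInt (phi x bt c k) u b <= M') -> l <= M').
Proof.
  intros Hx Hb Hc.
  assert (HPI : 0 < PI) by apply PI_RGT_0.
  assert (Hk : 0 < PI*x*bt) by (apply Rmult_lt_0_compat; [apply Rmult_lt_0_compat|]; lra).
  apply (L1 0 _ (1/(PI*x*bt)) (cont_phi x bt c k) (fun r _ => Rlt_le _ _ (phi_pos x bt c k r))).
  intros u b Hu Hub.
  eapply Rle_trans; [|apply (exp_int_bound (PI*x*bt) u b); lra].
  apply RInt_le. lra. apply exR with 0; auto; [apply cont_phi|lra].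
  apply exR with 0; [apply cont_exp|lra|lra].
  intros r Hr. unfold phi. apply exp_le.
  assert (0 <= c * Rpower r k) by (apply Rmult_le_pos; auto; left; apply Rpower_pos).
  replace (PI*x*bt*r) with (PI*x*r*bt) by ring. lra.
Qed.

Lemma I_lower x bt c k : 0 < x -> 0 < bt -> 0 <= c ->
  RInt (phi x bt c k) 1 2 <= IntFrom 0 (phi x bt c k).
Proof.
  intros Hx Hb Hc. destruct (I_ex x bt c k Hx Hb Hc) as [l [Hl [H1 _]]].
  rewrite (IntFrom_eq _ _ _ Hl). apply H1; lra.
Qed.

Lemma Q_pos x bt c k : 0 < RInt (phi x bt c k) 1 2.
Proof.
  apply RInt_gt_0. lra. intros; apply phi_pos. intros r Hr. apply cont_phi. lra.
Qed.

Lemma I_gap x x' bt c k : 0 < x' -> x' < x -> 0 < bt -> 0 <= c ->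
  IntFrom 0 (phi x bt c k) + (exp (PI*(x-x')*bt) - 1) * RInt (phi x bt c k) 1 2 <= IntFrom 0 (phi x' bt c k).
Proof.
  intros Hx' Hxx Hb Hc.
  destruct (I_ex x bt c k ltac:(lra) Hb Hc) as [l [Hl [_ Hl2]]].
  destruct (I_ex x' bt c k Hx' Hb Hc) as [l' [Hl' [Hl'1 _]]].
  rewrite (IntFrom_eq _ _ _ Hl), (IntFrom_eq _ _ _ Hl').
  set (e := exp (PI*(x-x')*bt)).
  assert (HPI : 0 < PI) by apply PI_RGT_0.
  assert (He1 : 1 <= e).
  { unfold e. rewrite <- exp_0. apply exp_le. assert (0 < PI*(x-x')*bt) by (apply pos3; lra). lra. }
  set (f := phi x bt c k). set (f' := phi x' bt c k).
  assert (Hrel : forall r, 0 < r -> f' r = exp (PI*(x-x')*bt*r) * f r).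
  { intros r Hr. unfold f, f', phi. rewrite <- exp_plus. f_equal. ring. }
  assert (Hf1 : forall r, 0 < r -> f r <= f' r).
  { intros r Hr. rewrite Hrel by auto. rewrite <- (Rmult_1_l (f r)) at 1.
    apply Rmult_le_compat_r. left; apply phi_pos. rewrite <- exp_0. apply exp_le.
    assert (0 < PI*(x-x')*bt*r) by (apply pos4; lra). lra. }
  assert (Hf2 : forall r, 1 <= r -> e * f r <= f' r).
  { intros r Hr. rewrite Hrel by lra. apply Rmult_le_compat_r. left; apply phi_pos.
    unfold e. apply exp_le. assert (0 < PI*(x-x')*bt) by (apply pos3; lra). nra. }
  assert (Hc0 : cont_on 0 f) by apply cont_phi.
  assert (Hc1 : cont_on 0 f') by apply cont_phi.
  assert (Q0 : 0 < RInt f 1 2) by apply Q_pos.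
  cut (l <= l' - (e - 1) * RInt f 1 2). lra.
  apply Hl2. intros u b Hu Hub.
  set (u' := Rmin u (1/2)). set (b' := Rmax b 3).
  assert (Hu'1 : u' <= 1/2) by apply Rmin_r. assert (Hu'2 : u' <= u) by apply Rmin_l.
  assert (Hu'0 : 0 < u') by (unfold u'; apply Rmin_glb_lt; lra).
  assert (Hb'1 : 3 <= b') by apply Rmax_r. assert (Hb'2 : b <= b') by apply Rmax_l.
  clearbody u' b'.
  assert (A1 : RInt f u b <= RInt f u' b') by (apply (RInt_mono 0 f); auto; try lra; intros; left; apply phi_pos).
  assert (A2 : RInt f 1 2 <= RInt f 1 b') by (apply (RInt_mono 0 f); auto; try lra; intros; left; apply phi_pos).
  assert (A3 : RInt f u' b' = RInt f u' 1 + RInt f 1 b') by (symmetry; apply RInt_Chasles_R; apply exR with 0; auto; lra).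
  assert (A4 : RInt f' u' b' = RInt f' u' 1 + RInt f' 1 b') by (symmetry; apply RInt_Chasles_R; apply exR with 0; auto; lra).
  assert (A5 : RInt f u' 1 <= RInt f' u' 1).
  { apply RInt_le. lra. apply exR with 0; auto; lra. apply exR with 0; auto; lra. intros r Hr; apply Hf1; lra. }
  assert (A6 : e * RInt f 1 b' <= RInt f' 1 b').
  { apply Rle_trans with (RInt (fun r => scal e (f r)) 1 b').
    - rewrite (RInt_scal (V:=R_CompleteNormedModule)) by (apply exR with 0; auto; lra). apply Rle_refl.
    - apply RInt_le. lra. apply (ex_RInt_scal (V:=R_NormedModule)). apply exR with 0; auto; lra.
      apply exR with 0; auto; lra. intros r Hr. apply Hf2. lra. }
  assert (A7 : RInt f' u' b' <= l') by (apply Hl'1; lra).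
  assert ((e-1) * RInt f 1 2 <= (e-1) * RInt f 1 b') by (apply Rmult_le_compat_l; lra).
  assert ((e-1) * RInt f 1 b' = e * RInt f 1 b' - RInt f 1 b') by ring.
  change (RInt f u b <= l' - (e - 1) * RInt f 1 2). lra.
Qed.



Lemma beta_pos mu T alpha : 0 < mu -> 0 < T -> 2 < alpha -> 0 < beta_fn mu T alpha.
Proof.
  intros Hmu HT Ha.
  assert (Hd : 0 < 2/alpha < 1).
  { split. apply Rdiv_lt_0_compat; lra. apply Rmult_lt_reg_r with alpha. lra.
    unfold Rdiv. rewrite Rmult_assoc, Rinv_l by lra. lra. }
  unfold beta_fn.
  change (IntFrom 0 (fun g => mu * exp (- (mu * g)) * (Rpower g (2 / alpha) *
      (upper_gamma (- (2 / alpha)) (mu * T * g) - gamma_ext (- (2 / alpha))))))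
    with (IntFrom 0 (hfun mu T (2/alpha) (gamma_ext (-(2/alpha))))).
  apply Rmult_lt_0_compat; [|apply beta_int_pos; auto].
  apply Rdiv_lt_0_compat; [|lra]. apply Rmult_lt_0_compat; [lra|apply Rpower_pos].
Qed.

Lemma DSR_eq lam a mu sigma2 T alpha g :
  DSR lam a mu sigma2 T alpha g =
  PI * lam * lam * ((a - g) * g) * IntFrom 0 (phi (lam*g) (beta_fn mu T alpha) (mu*T*sigma2) (alpha/2)).
Proof. unfold DSR, p_cov, phi. ring. Qed.

Theorem lemma1 (lam T mu sigma2 alpha a gamma1s : R) :
  0 < lam -> 0 < T -> 0 < mu -> 0 <= sigma2 -> 2 < alpha ->
  0 < a -> a <= 1 ->
  0 < gamma1s < a ->
  (forall gamma1, 0 < gamma1 < a ->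
     DSR lam a mu sigma2 T alpha gamma1 <= DSR lam a mu sigma2 T alpha gamma1s) ->
  gamma1s < a / 2 /\ a / 2 < a - gamma1s /\ a - gamma1s < a /\ a <= 1.
Proof.
  intros Hlam HT Hmu Hs Ha Ha0 Ha1 Hg Hmax.
  destruct (Rlt_dec gamma1s (a/2)) as [Hlt|Hge]; [lra|exfalso].
  set (g := gamma1s) in *.
  set (bt := beta_fn mu T alpha).
  assert (Hbt : 0 < bt) by (apply beta_pos; auto).
  set (c := mu*T*sigma2).
  assert (Hc : 0 <= c) by (unfold c; apply Rmult_le_pos; auto; nra).
  set (k := alpha/2).
  assert (HPI : 0 < PI) by apply PI_RGT_0.
  set (x := lam*g).
  assert (Hx : 0 < x) by (unfold x; nra).
  set (I := IntFrom 0 (phi x bt c k)).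
  set (Q := RInt (phi x bt c k) 1 2).
  assert (HQ : 0 < Q) by apply Q_pos.
  assert (HI : Q <= I) by (apply I_lower; auto).
  set (P := (a - g) * g).
  assert (HP : 0 < P) by (unfold P; nra).
  set (kap := PI * lam * bt * Q).
  assert (Hkap : 0 < kap) by (unfold kap; apply pos4; lra).
  set (eps := Rmin (g/2) (Rmin 1 (P * kap / (2 * (I + kap))))).
  assert (He1 : eps <= g/2) by apply Rmin_l.
  assert (He2 : eps <= 1) by (eapply Rle_trans; [apply Rmin_r|apply Rmin_l]).
  assert (Hq : 0 < P * kap / (2 * (I + kap))) by (apply Rdiv_lt_0_compat; nra).
  assert (He3 : eps <= P * kap / (2 * (I + kap))) by (eapply Rle_trans; [apply Rmin_r|apply Rmin_r]).
  assert (He0 : 0 < eps) by (unfold eps; apply Rmin_glb_lt; [lra|apply Rmin_glb_lt; lra]).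
  clearbody eps.
  set (g' := g - eps).
  assert (Hg' : 0 < g' < a) by (unfold g'; lra).
  specialize (Hmax g' Hg').
  rewrite !DSR_eq in Hmax. fold bt c k in Hmax. fold x in Hmax. fold I in Hmax.
  assert (Hx1 : 0 < lam*g') by (apply Rmult_lt_0_compat; lra).
  assert (Hx2 : lam*g' < x) by (unfold x, g'; assert (0 < lam*eps) by (apply Rmult_lt_0_compat; lra); lra).
  pose proof (I_gap x (lam*g') bt c k Hx1 Hx2 Hbt Hc) as Hgap.
  fold I Q in Hgap.
  set (I' := IntFrom 0 (phi (lam * g') bt c k)) in *.
  assert (Hexp : PI * (x - lam*g') * bt <= exp (PI * (x - lam*g') * bt) - 1).
  { pose proof (exp_ineq1_le (PI * (x - lam*g') * bt)). lra. }
  assert (Hxd : x - lam*g' = lam*eps) by (unfold x, g'; ring).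
  rewrite Hxd in Hexp.
  assert (HI' : I + kap * eps <= I').
  { apply Rle_trans with (I + (exp (PI * (lam*eps) * bt) - 1) * Q).
    - unfold kap. assert (PI * (lam*eps) * bt * Q <= (exp (PI * (lam*eps) * bt) - 1) * Q) by (apply Rmult_le_compat_r; lra).
      replace (PI * lam * bt * Q * eps) with (PI * (lam*eps) * bt * Q) by ring. lra.
    - rewrite <- Hxd. auto. }
  set (P' := (a - g') * g') in *.
  assert (HP' : 0 < P') by (unfold P'; nra).
  assert (HPP : P - eps*eps <= P') by (unfold P', P, g'; nra).
  assert (Hkey : P * I < P' * I').
  { assert (S1 : P' * (I + kap*eps) <= P' * I') by (apply Rmult_le_compat_l; lra).
    assert (S2 : (P - eps*eps) * (I + kap*eps) <= P' * (I + kap*eps)) by (apply Rmult_le_compat_r; nra).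
    assert (S3 : eps * (I + kap) <= P * kap / 2).
    { apply Rle_trans with (P * kap / (2 * (I + kap)) * (I + kap)). apply Rmult_le_compat_r; lra.
      right. field. lra. }
    assert (S4 : eps * eps * (I + kap * eps) <= eps * (eps * (I + kap))).
    { assert (kap * eps <= kap) by nra. nra. }
    assert (S5 : eps * (eps * (I + kap)) <= eps * (P * kap / 2)) by (apply Rmult_le_compat_l; lra).
    assert (S6 : (P - eps*eps) * (I + kap*eps) = P * I + P*kap*eps - eps*eps*(I + kap*eps)) by ring.
    assert (S7 : eps * (P * kap / 2) = P*kap*eps/2) by field.
    assert (S8 : 0 < P*kap*eps) by (apply pos3; lra).
    lra. }
  assert (0 < PI * lam * lam) by (apply pos3; lra).
  assert (PI * lam * lam * P * I < PI * lam * lam * P' * I').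
  { replace (PI * lam * lam * P * I) with ((PI*lam*lam) * (P*I)) by ring.
    replace (PI * lam * lam * P' * I') with ((PI*lam*lam) * (P'*I')) by ring.
    apply Rmult_lt_compat_l; auto. }
  unfold P, P' in *. lra.
Qed.
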